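(* Let $X$ be a topological space in which every open set is a union of countably many clopen sets. Assume that $C_p(X,\{0,1\})$ is an $\alpha_1$ space, and let $\mathcal{U}=\{U_n:n\in\mathbb{N}\}$ be a bijectively enumerated family of open subsets of $X$. Then the Marczewski map $\mathcal{U}:X\to P(\mathbb{N})$ is a discrete limit of a sequence of continuous functions $\Psi_m:X\to P(\mathbb{N})$.
   Context: $C_p(X,\{0,1\})$ is the set of continuous functions $X\to\{0,1\}$ with the topology of pointwise convergence. In a space $Y$, a countable set $A$ of distinct points converges to $y$ if some (equivalently every) bijective enumeration of $A$ converges to $y$; $Y$ is an $\alpha_1$ space if for each $y\in Y$ and each sequence $A_1,A_2,\dots$ of countably infinite sets each converging to $y$, there are cofinite $B_n\subseteq A_n$ such that $\bigcup_nB_n$ converges to $y$. $P(\mathbb{N})$ carries the Cantor space topology (identified with $\{0,1\}^{\mathbb{N}}$ via characteristic functions). The Marczewski map of a bijectively enumerated family $\mathcal{U}=\{U_n\}$ of subsets of $X$ is $\mathcal{U}(x)=\{n\in\mathbb{N}:x\in U_n\}$. A function $f$ on $X$ is a discrete limit of functions $f_m$ if for each $x\in X$, $f_m(x)=f(x)$ for all but finitely many $m$. *)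

(* Defs.v *)
From Stdlib Require Import List Arith ClassicalEpsilon.
Import ListNotations.
Set Implicit Arguments.

Record topology (X : Type) := Topology {
  is_open : (X -> Prop) -> Prop;
  open_full : is_open (fun _ => True);
  open_inter : forall U V, is_open U -> is_open V -> is_open (fun x => U x /\ V x);
  open_union : forall (I : Type) (F : I -> X -> Prop),
      (forall i, is_open (F i)) -> is_open (fun x => exists i, F i x)
}.

Definition is_closed X (T : topology X) (U : X -> Prop) : Prop :=
  is_open T (fun x => ~ U x).

Definition is_clopen X (T : topology X) (U : X -> Prop) : Prop :=
  is_open T U /\ is_closed T U.

Definition open_countable_union_clopen X (T : topology X) : Prop :=
  forall U, is_open T U ->
    exists C : nat -> X -> Prop,
      (forall n, is_clopen T (C n)) /\ (forall x, U x <-> exists n, C n x).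

Definition continuous X Y (TX : topology X) (TY : topology Y) (f : X -> Y) : Prop :=
  forall V, is_open TY V -> is_open TX (fun x => V (f x)).

Definition discrete_bool : topology bool.
Proof.
  refine (@Topology bool (fun _ => True) _ _ _); auto.
Defined.

(** Topology of pointwise convergence (initial topology of ev : Y -> (A -> bool)
    into the product {0,1}^A): W is open iff every point y of W has a basic
    neighbourhood {z | z agrees with y on a finite set F} contained in W. *)
Definition pointwise_open Y A (ev : Y -> A -> bool) (W : Y -> Prop) : Prop :=
  forall y, W y -> exists F : list A,
    forall z, (forall a, In a F -> ev z a = ev y a) -> W z.

Definition pointwise_top Y A (ev : Y -> A -> bool) : topology Y.
Proof.
  refine (@Topology Y (pointwise_open ev) _ _ _).
  - intros y _. exists nil. auto.
  - intros U V HU HV y [Uy Vy].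
    destruct (HU y Uy) as [F1 H1]. destruct (HV y Vy) as [F2 H2].
    exists (F1 ++ F2). intros z Hz. split.
    + apply H1. intros a Ha. apply Hz. apply in_or_app. auto.
    + apply H2. intros a Ha. apply Hz. apply in_or_app. auto.
  - intros I F HF y [i Hi].
    destruct (HF i y Hi) as [G HG]. exists G. intros z Hz. exists i. auto.
Defined.

(** P(N) with the Cantor space topology, identified with {0,1}^N. *)
Definition cantor_top : topology (nat -> bool) := pointwise_top (fun s : nat -> bool => s).

Definition Cp X (T : topology X) : Type :=
  { f : X -> bool | continuous T discrete_bool f }.

Definition Cp_top X (T : topology X) : topology (Cp T) :=
  pointwise_top (fun f : Cp T => proj1_sig f).

Definition seq_converges Y (T : topology Y) (s : nat -> Y) (y : Y) : Prop :=
  forall W, is_open T W -> W y -> exists N, forall n, N <= n -> W (s n).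

Definition bij_enum Y (e : nat -> Y) (A : Y -> Prop) : Prop :=
  (forall i j, e i = e j -> i = j) /\ (forall n, A (e n)) /\
  (forall a, A a -> exists n, e n = a).

(** A countably infinite set A converges to y: some bijective enumeration
    of A converges to y. *)
Definition set_converges Y (T : topology Y) (A : Y -> Prop) (y : Y) : Prop :=
  exists e, bij_enum e A /\ seq_converges T e y.

Definition cofinite_subset Y (B A : Y -> Prop) : Prop :=
  (forall a, B a -> A a) /\ exists l : list Y, forall a, A a -> ~ B a -> In a l.

Definition alpha1 Y (T : topology Y) : Prop :=
  forall (y : Y) (A : nat -> Y -> Prop),
    (forall n, set_converges T (A n) y) ->
    exists B : nat -> Y -> Prop,
      (forall n, cofinite_subset (B n) (A n)) /\
      set_converges T (fun a => exists n, B n a) y.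

Definition marczewski X (U : nat -> X -> Prop) (x : X) : nat -> bool :=
  fun n => if excluded_middle_informative (U n x) then true else false.

Definition discrete_limit X Y (f : X -> Y) (fm : nat -> X -> Y) : Prop :=
  forall x, exists N, forall m, N <= m -> fm m x = f x.

(* Main.v *)
Require Import Defs.
From Stdlib Require Import List Arith ClassicalEpsilon Lia Classical FunctionalExtensionality PropExtensionality.
Import ListNotations.

Lemma pset_ext {X : Type} (A B : X -> Prop) : (forall x, A x <-> B x) -> A = B.
Proof. intros H. apply functional_extensionality; intro x; apply propositional_extensionality; auto. Qed.

Lemma open_ext {X : Type} (T : topology X) (A B : X -> Prop) :
  (forall x, A x <-> B x) -> is_open T A -> is_open T B.
Proof. intros H HA. rewrite <- (pset_ext A B H). exact HA. Qed.

Lemma open_empty {X : Type} (T : topology X) : is_open T (fun _ => False).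
Proof.
  apply (open_ext T (fun x => exists i : False, (fun (i:False) (_:X) => True) i x)).
  - intros x; split; [intros [i _]; destruct i | intros []].
  - apply open_union. intros i; destruct i.
Qed.

Lemma open_or {X : Type} (T : topology X) (A B : X -> Prop) :
  is_open T A -> is_open T B -> is_open T (fun x => A x \/ B x).
Proof.
  intros HA HB.
  apply (open_ext T (fun x => exists b : bool, (fun (b:bool) => if b then A else B) b x)).
  - intros x; split.
    + intros [[|] H]; auto.
    + intros [H|H]; [exists true|exists false]; auto.
  - apply open_union. intros [|]; auto.
Qed.

Lemma clopen_ext {X : Type} (T : topology X) (A B : X -> Prop) :
  (forall x, A x <-> B x) -> is_clopen T A -> is_clopen T B.
Proof.
  intros H [H1 H2]. split.
  - eapply open_ext; [|exact H1]. exact H.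
  - unfold is_closed in *. eapply open_ext; [|exact H2]. intro x; simpl; rewrite (H x); tauto.
Qed.

Lemma clopen_and {X : Type} (T : topology X) (A B : X -> Prop) :
  is_clopen T A -> is_clopen T B -> is_clopen T (fun x => A x /\ B x).
Proof.
  intros [HA1 HA2] [HB1 HB2]. split.
  - apply open_inter; auto.
  - unfold is_closed in *. eapply open_ext; [|apply (open_or T _ _ HA2 HB2)].
    intro x; simpl. tauto.
Qed.

Lemma clopen_or {X : Type} (T : topology X) (A B : X -> Prop) :
  is_clopen T A -> is_clopen T B -> is_clopen T (fun x => A x \/ B x).
Proof.
  intros [HA1 HA2] [HB1 HB2]. split.
  - apply open_or; auto.
  - unfold is_closed in *. eapply open_ext; [|apply (open_inter T _ _ HA2 HB2)].
    intro x; simpl. tauto.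
Qed.

Lemma clopen_not {X : Type} (T : topology X) (A : X -> Prop) :
  is_clopen T A -> is_clopen T (fun x => ~ A x).
Proof.
  intros [HA1 HA2]. split.
  - exact HA2.
  - unfold is_closed. eapply open_ext; [|exact HA1]. intro x; simpl. tauto.
Qed.

Lemma clopen_false {X : Type} (T : topology X) : is_clopen T (fun _ => False).
Proof.
  split.
  - apply open_empty.
  - unfold is_closed. eapply open_ext; [|apply open_full]. intro x; simpl; tauto.
Qed.

Lemma clopen_const_and {X : Type} (T : topology X) (c : Prop) (A : X -> Prop) :
  is_clopen T A -> is_clopen T (fun x => c /\ A x).
Proof.
  intros H. destruct (classic c) as [Hc|Hc].
  - eapply clopen_ext; [|exact H]. intro x; simpl; tauto.
  - eapply clopen_ext; [|apply clopen_false]. intro x; simpl; tauto.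
Qed.

Lemma clopen_bex {X : Type} (T : topology X) (P : nat -> X -> Prop) :
  (forall k, is_clopen T (P k)) -> forall j, is_clopen T (fun x => exists k, k < j /\ P k x).
Proof.
  intros H j. induction j.
  - eapply clopen_ext; [|apply clopen_false]. intro x; split; [tauto|intros [k [Hk _]]; lia].
  - eapply clopen_ext; [|apply (clopen_or T _ _ (H j) IHj)]. intro x; split.
    + intros [Hx|[k [Hk Hx]]]; [exists j; split; [lia|auto]|exists k; split; [lia|auto]].
    + intros [k [Hk Hx]]. destruct (Nat.eq_dec k j) as [->|Hne]; [left; auto|right; exists k; split; [lia|auto]].
Qed.

Definition chi {X : Type} (A : X -> Prop) (x : X) : bool :=
  if excluded_middle_informative (A x) then true else false.

Lemma chi_true {X : Type} (A : X -> Prop) x : chi A x = true <-> A x.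
Proof. unfold chi; destruct (excluded_middle_informative (A x)); split; congruence || tauto. Qed.

Lemma chi_false {X : Type} (A : X -> Prop) x : chi A x = false <-> ~ A x.
Proof. unfold chi; destruct (excluded_middle_informative (A x)); split; congruence || tauto. Qed.

Lemma if_iff (P Q : Prop) : (P <-> Q) ->
  (if excluded_middle_informative P then true else false) =
  (if excluded_middle_informative Q then true else false).
Proof.
  intros H; destruct (excluded_middle_informative P); destruct (excluded_middle_informative Q); tauto.
Qed.

Lemma chi_cont {X : Type} (T : topology X) (A : X -> Prop) :
  is_clopen T A -> continuous T discrete_bool (chi A).
Proof.
  intros HA V _.
  eapply open_ext with (A := fun x => (V true /\ A x) \/ (V false /\ ~ A x)).
  - intro x. unfold chi. destruct (excluded_middle_informative (A x)); split; intros; tauto.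
  - apply open_or; apply clopen_const_and; [exact HA| apply clopen_not; exact HA].
Qed.

Lemma cont_clopen {X : Type} (T : topology X) (f : X -> bool) :
  continuous T discrete_bool f -> is_clopen T (fun x => f x = true).
Proof.
  intros Hf. split.
  - apply (Hf (fun b => b = true)). exact I.
  - apply (Hf (fun b => ~ b = true)). exact I.
Qed.

Lemma open_list_forall {X A : Type} (T : topology X) (Q : A -> X -> Prop) (F : list A) :
  (forall a, is_open T (Q a)) -> is_open T (fun x => forall a, In a F -> Q a x).
Proof.
  intros H. induction F as [|a F IH].
  - eapply open_ext; [|apply open_full]. intro x; simpl; tauto.
  - eapply open_ext; [|apply (open_inter T _ _ (H a) IH)]. intro x; simpl.
    split.
    + intros [H1 H2] b [<-|Hb]; auto.
    + intros H1; split; auto.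
Qed.

Lemma clopen_coord_cont {X : Type} (T : topology X) (f : X -> nat -> bool) :
  (forall n, is_clopen T (fun x => f x n = true)) -> continuous T cantor_top f.
Proof.
  intros H V HV.
  assert (Hch : forall i : {x0 : X | V (f x0)}, exists F : list nat,
            forall z : nat -> bool, (forall a, In a F -> z a = f (proj1_sig i) a) -> V z).
  { intros [x0 Hx0]. exact (HV (f x0) Hx0). }
  set (FF := fun i => proj1_sig (constructive_indefinite_description _ (Hch i))).
  apply (open_ext T (fun x => exists i : {x0 : X | V (f x0)},
     (fun i x => forall a, In a (FF i) -> f x a = f (proj1_sig i) a) i x)).
  - intro x. split.
    + intros [i Hi]. apply (proj2_sig (constructive_indefinite_description _ (Hch i))). exact Hi.
    + intros Hx. exists (exist _ x Hx). intros; reflexivity.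
  - apply open_union. intro i. apply open_list_forall. intro a.
    destruct (f (proj1_sig i) a) eqn:E.
    + apply (H a).
    + eapply open_ext; [|apply (proj2 (H a))]. intro x; simpl.
      destruct (f x a); split; congruence || tauto.
Qed.

Lemma least_ex (P : nat -> Prop) : (exists n, P n) -> exists n, P n /\ forall k, k < n -> ~ P k.
Proof.
  intros [n Hn]. induction n as [n IH] using lt_wf_ind.
  destruct (classic (exists k, k < n /\ P k)) as [[k [Hk HPk]]|Hno].
  - exact (IH k Hk HPk).
  - exists n. split; auto. intros k Hk HPk. apply Hno. eauto.
Qed.

Lemma enum_inf (P : nat -> Prop) : (forall N, exists j, N <= j /\ P j) ->
  exists g : nat -> nat, (forall k, P (g k)) /\ (forall k, g k < g (S k)) /\
    (forall j, P j -> exists k, g k = j).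
Proof.
  intros Hinf.
  set (nx := fun N => proj1_sig (constructive_indefinite_description _
                        (least_ex (fun j => N <= j /\ P j) (Hinf N)))).
  assert (Hnx : forall N, (N <= nx N /\ P (nx N)) /\ forall k, k < nx N -> ~ (N <= k /\ P k)).
  { intro N. exact (proj2_sig (constructive_indefinite_description _
                        (least_ex (fun j => N <= j /\ P j) (Hinf N)))). }
  set (g := fix g k := match k with 0 => nx 0 | S k => nx (S (g k)) end).
  exists g. split; [|split].
  - intros [|k]; simpl; apply Hnx.
  - intro k. simpl. destruct (Hnx (S (g k))) as [[H1 _] _]. lia.
  - assert (Hge : forall k, k <= g k).
    { induction k; [lia|]. simpl. destruct (Hnx (S (g k))) as [[H1 _] _]. lia. }
    assert (Hr : forall k j, P j -> j <= g k -> exists i, g i = j).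
    { induction k; intros j Hj Hle.
      - exists 0. simpl in *. destruct (Hnx 0) as [_ H2].
        destruct (Nat.eq_dec j (nx 0)); auto. exfalso. apply (H2 j); [lia|split; [lia|auto]].
      - destruct (le_lt_dec j (g k)) as [Hl|Hl]; [apply (IHk j Hj Hl)|].
        exists (S k). simpl in *. destruct (Hnx (S (g k))) as [_ H2].
        destruct (Nat.eq_dec j (nx (S (g k)))); auto. exfalso.
        apply (H2 j); [lia|split; [lia|auto]]. }
    intros j Hj. apply (Hr j j Hj (Hge j)).
Qed.

Lemma strict_ge (g : nat -> nat) : (forall k, g k < g (S k)) -> forall k, k <= g k.
Proof. intros H k. induction k; [lia|]. specialize (H k). lia. Qed.

Lemma strict_lt (g : nat -> nat) : (forall k, g k < g (S k)) -> forall i k, i < k -> g i < g k.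
Proof.
  intros H i k Hik. induction k; [lia|].
  destruct (Nat.eq_dec i k) as [->|Hne]; [apply H|]. specialize (H k). specialize (IHk ltac:(lia)). lia.
Qed.

Lemma strict_inj (g : nat -> nat) : (forall k, g k < g (S k)) -> forall i k, g i = g k -> i = k.
Proof.
  intros H i k E. destruct (lt_eq_lt_dec i k) as [[Hl|He]|Hl]; auto;
  [pose proof (strict_lt g H i k Hl)|pose proof (strict_lt g H k i Hl)]; lia.
Qed.

Definition Dd {X : Type} (C : nat -> X -> Prop) (j : nat) (x : X) : Prop := exists k, k < j /\ C k x.
Definition Ee {X : Type} (C : nat -> X -> Prop) (j : nat) (x : X) : Prop := C j x /\ ~ Dd C j x.

Lemma E_disj {X : Type} (C : nat -> X -> Prop) j j' x : Ee C j x -> Ee C j' x -> j = j'.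
Proof.
  intros [H1 H2] [H3 H4]. destruct (lt_eq_lt_dec j j') as [[Hl|He]|Hl]; auto.
  - exfalso; apply H4; exists j; auto.
  - exfalso; apply H2; exists j'; auto.
Qed.

Lemma E_least {X : Type} (C : nat -> X -> Prop) k x : C k x -> exists j, Ee C j x.
Proof.
  intros H. destruct (least_ex (fun k => C k x) (ex_intro _ k H)) as [j [Hj Hl]].
  exists j. split; auto. intros [i [Hi Ci]]. exact (Hl i Hi Ci).
Qed.

Lemma clopen_D {X : Type} (T : topology X) (C : nat -> X -> Prop) :
  (forall k, is_clopen T (C k)) -> forall j, is_clopen T (Dd C j).
Proof. intros H j. apply (clopen_bex T C H j). Qed.

Lemma clopen_E {X : Type} (T : topology X) (C : nat -> X -> Prop) :
  (forall k, is_clopen T (C k)) -> forall j, is_clopen T (Ee C j).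
Proof. intros H j. apply clopen_and; [apply H|apply clopen_not; apply clopen_D; auto]. Qed.

Lemma construct (X : Type) (T : topology X) (U : nat -> X -> Prop) (C : nat -> nat -> X -> Prop)
 (HCc: forall n k, is_clopen T (C n k)) (HCU : forall n x, U n x <-> exists k, C n k x)
 (e : nat -> X -> bool) (Hec : forall k, is_clopen T (fun y => e k y = true))
 (M : nat -> nat)
 (Hconv : forall x, exists N, forall k, N <= k -> e k x = false)
 (Hkey : forall n j z, Ee (C n) j z -> M n < j -> exists k, forall y, e k y = true <-> Ee (C n) j y) :
 exists Psi : nat -> X -> (nat -> bool),
    (forall m, continuous T cantor_top (Psi m)) /\ discrete_limit (marczewski U) Psi.
Proof.
  exists (fun m x n => chi (fun y => Dd (C n) (S (Nat.max m (M n))) y \/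
      exists k, k < S m /\ ((forall z, e k z = true -> U n z) /\ e k y = true)) x).
  split.
  - intro m. apply clopen_coord_cont. intro n.
    eapply clopen_ext; [intro x; symmetry; apply chi_true|].
    apply clopen_or; [apply clopen_D; auto|].
    apply (clopen_bex T (fun k y => (forall z, e k z = true -> U n z) /\ e k y = true)).
    intro k. apply clopen_const_and. apply Hec.
  - intro x. destruct (Hconv x) as [N HN]. exists N. intros m Hm.
    apply functional_extensionality; intro n. unfold marczewski, chi. apply if_iff. split.
    + intros [[k [_ Hk]]|[k [_ [Hsub Hek]]]]; [apply HCU; eauto|auto].
    + intros Hu. destruct (proj1 (HCU n x) Hu) as [k0 Hk0].
      destruct (E_least _ _ _ Hk0) as [j Hj].
      destruct (lt_dec j (S (Nat.max m (M n)))) as [Hl|Hl].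
      * left. exists j. split; [auto|apply Hj].
      * destruct (Hkey n j x Hj ltac:(lia)) as [k Hk]. right. exists k.
        assert (Hekx : e k x = true) by (apply Hk; exact Hj).
        split; [|split; auto].
        -- destruct (le_lt_dec N k) as [Hl2|Hl2]; [rewrite (HN k Hl2) in Hekx; discriminate|lia].
        -- intros z Hz. apply HCU. exists j. apply Hk in Hz. apply Hz.
Qed.

Definition mkchi {X : Type} (T : topology X) (E : X -> Prop) (H : is_clopen T E) : Cp T :=
  exist _ (chi E) (chi_cont T E H).

Lemma const_cont {X : Type} (T : topology X) : continuous T discrete_bool (fun _ : X => false).
Proof.
  intros V _. destruct (classic (V false)).
  - eapply open_ext; [|apply open_full]. intro; simpl; tauto.
  - eapply open_ext; [|apply open_empty]. intro; simpl; tauto.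
Qed.

Definition zeroCp {X : Type} (T : topology X) : Cp T := exist _ (fun _ => false) (const_cont T).

Lemma mkchi_inj {X : Type} (T : topology X) (C : nat -> X -> Prop) (HC : forall k, is_clopen T (C k)) j j' :
  (exists z, Ee C j z) -> mkchi T (Ee C j) (clopen_E T C HC j) = mkchi T (Ee C j') (clopen_E T C HC j') -> j = j'.
Proof.
  intros [z Hz] E. apply (f_equal (fun f => proj1_sig f z)) in E. simpl in E.
  assert (chi (Ee C j) z = true) by (apply chi_true; auto).
  assert (Ee C j' z) by (apply chi_true; congruence).
  eapply E_disj; eauto.
Qed.

Lemma conv_piece {X : Type} (T : topology X) (C : nat -> X -> Prop) (HC : forall k, is_clopen T (C k)) :
  (forall N, exists j, N <= j /\ exists z, Ee C j z) ->
  set_converges (Cp_top T) (fun f => exists j, (exists z, Ee C j z) /\ f = mkchi T (Ee C j) (clopen_E T C HC j)) (zeroCp T).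
Proof.
  intros Hinf. destruct (enum_inf _ Hinf) as [g [Pg [Hg Hr]]].
  exists (fun k => mkchi T (Ee C (g k)) (clopen_E T C HC (g k))). split; [split; [|split]|].
  - intros i k E. apply mkchi_inj in E; [|apply Pg]. eapply strict_inj; eauto.
  - intros n. exists (g n). auto.
  - intros a [j [Hne ->]]. destruct (Hr j Hne) as [k Hk]. exists k. subst; reflexivity.
  - intros W HW HW0.
    destruct (HW (zeroCp T) HW0) as [F HF].
    assert (HN : forall F : list X, exists N, forall k, N <= k -> forall a, In a F -> chi (Ee C (g k)) a = false).
    { induction F0 as [|a F0 [N IH]].
      - exists 0. intros k _ a [].
      - destruct (classic (exists j, Ee C j a)) as [[j Hj]|Hno].
        + exists (Nat.max N (S j)). intros k Hk b [<-|Hb]; [|apply IH; auto; lia].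
          apply chi_false. intros He. pose proof (E_disj C _ _ _ He Hj).
          pose proof (strict_ge g Hg k). lia.
        + exists N. intros k Hk b [<-|Hb]; [|apply IH; auto].
          apply chi_false. intros He. apply Hno; eauto. }
    destruct (HN F) as [N HN']. exists N. intros k Hk. apply HF. intros a Ha.
    simpl. apply (HN' k Hk a Ha).
Qed.

Lemma list_bound {X : Type} (T : topology X) (C : nat -> X -> Prop) (HC : forall k, is_clopen T (C k)) (l : list (Cp T)) :
  exists M, forall j, (exists z, Ee C j z) -> In (mkchi T (Ee C j) (clopen_E T C HC j)) l -> j <= M.
Proof.
  induction l as [|a l [M IH]].
  - exists 0. intros j _ [].
  - destruct (classic (exists j0, (exists z, Ee C j0 z) /\ a = mkchi T (Ee C j0) (clopen_E T C HC j0))) as [[j0 [Hne ->]]|Hno].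
    + exists (Nat.max j0 M). intros j Hj [E|Hin].
      * apply mkchi_inj in E; [lia|auto].
      * specialize (IH j Hj Hin). lia.
    + exists M. intros j Hj [E|Hin]; [|auto]. exfalso. apply Hno. eauto.
Qed.

Lemma not_inf_bound {X : Type} (C : nat -> X -> Prop) :
  ~ (forall N, exists j, N <= j /\ exists z, Ee C j z) -> exists K, forall j, K <= j -> ~ exists z, Ee C j z.
Proof.
  intros H. apply not_all_ex_not in H. destruct H as [K HK]. exists K. intros j Hj Hz. apply HK. eauto.
Qed.

Theorem mainTheorem5 (X : Type) (T : topology X)
  (HX : open_countable_union_clopen T)
  (Halpha : alpha1 (Cp_top T))
  (U : nat -> X -> Prop)
  (Uopen : forall n, is_open T (U n))
  (Uinj : forall i j, U i = U j -> i = j) :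
  exists Psi : nat -> X -> (nat -> bool),
    (forall m, continuous T cantor_top (Psi m)) /\
    discrete_limit (marczewski U) Psi.
Proof.
  set (C := fun n => proj1_sig (constructive_indefinite_description _ (HX (U n) (Uopen n)))).
  assert (HCs : forall n, (forall k, is_clopen T (C n k)) /\ (forall x, U n x <-> exists k, C n k x)).
  { intro n. exact (proj2_sig (constructive_indefinite_description _ (HX (U n) (Uopen n)))). }
  assert (HCc : forall n k, is_clopen T (C n k)) by (intros; apply HCs).
  assert (HCU : forall n x, U n x <-> exists k, C n k x) by (intros; apply HCs).
  clearbody C.
  set (I := fun n => forall N, exists j, N <= j /\ exists z, Ee (C n) j z).
  destruct (classic (exists n0, I n0)) as [[n0 Hn0]|Hno].
  2:{ assert (HM : forall n, exists K, forall j, K <= j -> ~ exists z, Ee (C n) j z).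
      { intro n. apply not_inf_bound. intro Hi. apply Hno. eauto. }
      set (M := fun n => proj1_sig (constructive_indefinite_description _ (HM n))).
      apply (construct X T U C HCc HCU (fun _ _ => false)) with (M := M).
      - intro k. eapply clopen_ext; [|apply clopen_false]. intro; split; [tauto|discriminate].
      - intro x. exists 0. auto.
      - intros n j z Hz Hl. exfalso.
        apply (proj2_sig (constructive_indefinite_description _ (HM n)) j); [fold (M n); lia|eauto]. }
  set (h := fun n => if excluded_middle_informative (I n) then n else n0).
  assert (Hh : forall n, I (h n)).
  { intro n; unfold h; destruct (excluded_middle_informative (I n)); auto. }
  set (A := fun n (f : Cp T) => exists j, (exists z, Ee (C (h n)) j z) /\
                 f = mkchi T (Ee (C (h n)) j) (clopen_E T (C (h n)) (HCc (h n)) j)).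
  destruct (Halpha (zeroCp T) A) as [B [HB [ee [[Hinj [HS Hsurj]] Hconv]]]].
  { intro n. apply (conv_piece T (C (h n)) (HCc (h n)) (Hh n)). }
  assert (HM : forall n, exists M, forall j z, Ee (C n) j z -> M < j ->
       exists k, forall y, proj1_sig (ee k) y = true <-> Ee (C n) j y).
  { intro n. destruct (classic (I n)) as [Hi|Hni].
    - assert (hn : h n = n) by (unfold h; destruct (excluded_middle_informative (I n)); tauto).
      destruct (HB n) as [HBA [l Hl]].
      destruct (list_bound T (C n) (HCc n) l) as [M HMl]. exists M.
      intros j z Hz Hj.
      assert (HA : A n (mkchi T (Ee (C n) j) (clopen_E T (C n) (HCc n) j))).
      { unfold A. rewrite hn. exists j. split; eauto. }
      destruct (classic (B n (mkchi T (Ee (C n) j) (clopen_E T (C n) (HCc n) j)))) as [HBn|HBn].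
      + destruct (Hsurj _ (ex_intro _ n HBn)) as [k Hk]. exists k. intro y. rewrite Hk. simpl. apply chi_true.
      + exfalso. specialize (HMl j (ex_intro _ z Hz) (Hl _ HA HBn)). lia.
    - destruct (not_inf_bound (C n) Hni) as [K HK]. exists K. intros j z Hz Hj.
      exfalso. apply (HK j); [lia|eauto]. }
  set (M := fun n => proj1_sig (constructive_indefinite_description _ (HM n))).
  apply (construct X T U C HCc HCU (fun k => proj1_sig (ee k))) with (M := M).
  - intro k. apply cont_clopen. apply (proj2_sig (ee k)).
  - intro x.
    assert (HW : is_open (Cp_top T) (fun f : Cp T => proj1_sig f x = false)).
    { intros f Hf. exists [x]. intros z Hz. rewrite (Hz x (or_introl eq_refl)). exact Hf. }
    destruct (Hconv _ HW eq_refl) as [N HN]. exists N. exact HN.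
  - intros n j z Hz Hl. exact (proj2_sig (constructive_indefinite_description _ (HM n)) j z Hz Hl).
Qed.
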